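(* Let $\Delta\subset[0,d]\times[0,d]$ be a minimal lattice polygon with $\operatorname{lw}(\Delta)=d\ge1$, and let $P$ be a vertex of $\Delta$. Then there exists $v\in\{(0,1),(1,0),(1,1),(1,-1)\}$ with $\operatorname{lw}_v(\Delta_P)<d$.
   Context: A lattice polygon is the convex hull of a finite non-empty set of points of $\mathbb{Z}^2$. For a lattice polygon $\Delta$ and a non-zero primitive $v\in\mathbb{Z}^2$, $\operatorname{lw}_v(\Delta)=\max_{Q\in\Delta}\langle Q,v\rangle-\min_{Q\in\Delta}\langle Q,v\rangle$, and $\operatorname{lw}(\Delta)=\min_v\operatorname{lw}_v(\Delta)$ over all non-zero primitive $v\in\mathbb{Z}^2$. A lattice polygon $\Delta$ is minimal if $\operatorname{lw}(\Delta')<\operatorname{lw}(\Delta)$ for every lattice polygon $\Delta'\subsetneq\Delta$. For a vertex $P$ of $\Delta$, $\Delta_P:=\operatorname{conv}((\Delta\cap\mathbb{Z}^2)\setminus\{P\})$. *)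

(* Defs.v *)
From HB Require Import structures.
From mathcomp Require Import all_boot all_order all_algebra.
Set Implicit Arguments. Unset Strict Implicit. Unset Printing Implicit Defensive.
Import Order.TTheory GRing.Theory Num.Theory.
Local Open Scope ring_scope.

Definition lpt := (int * int)%type.
Definition ptQ (z : lpt) : rat * rat := (z.1%:~R, z.2%:~R).

Definition inPoly (S : seq lpt) (x : rat * rat) : Prop :=
  exists w : seq rat,
    [/\ size w = size S, all (fun a => 0 <= a) w, \sum_(a <- w) a = 1,
        x.1 = \sum_(i < size S) w`_i * ((nth (0,0) S i).1)%:~R
      & x.2 = \sum_(i < size S) w`_i * ((nth (0,0) S i).2)%:~R].

Definition is_vertex (S : seq lpt) (P : lpt) : Prop :=
  inPoly S (ptQ P) /\
  forall x y : rat * rat, inPoly S x -> inPoly S y ->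
    ptQ P = ((x.1 + y.1) / 2, (x.2 + y.2) / 2) -> x = y.

Definition dotz (z v : lpt) : int := z.1 * v.1 + z.2 * v.2.

(* lw_v(conv S) = max_{s in S} <s,v> - min_{s in S} <s,v>
   (the extrema of a linear form over conv S are attained on S) *)
Definition lwv (S : seq lpt) (v : lpt) : int :=
  match S with
  | [::] => 0
  | s :: S' =>
      foldr (fun t m => Num.max (dotz t v) m) (dotz s v) S' -
      foldr (fun t m => Num.min (dotz t v) m) (dotz s v) S'
  end.

Definition primitive (v : lpt) : bool := gcdz v.1 v.2 == 1.

Definition is_lw (S : seq lpt) (d : int) : Prop :=
  (exists v, primitive v /\ lwv S v = d) /\
  (forall v, primitive v -> d <= lwv S v).

Definition minimal (S : seq lpt) : Prop :=
  forall S' : seq lpt, S' != [::] ->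
    (forall x, inPoly S' x -> inPoly S x) ->
    (exists x, inPoly S x /\ ~ inPoly S' x) ->
    forall d d', is_lw S d -> is_lw S' d' -> d' < d.

(* Main.v *)
Require Import Defs.
From HB Require Import structures.
From mathcomp Require Import all_boot all_order all_algebra.
Import Order.TTheory GRing.Theory Num.Theory.
From mathcomp Require Import zify ring lra.
From Stdlib Require Import Classical.
Local Open Scope ring_scope.

Lemma fmax_ge (f : lpt -> int) s S' t : t \in s :: S' ->
  f t <= foldr (fun t m => Num.max (f t) m) (f s) S'.
Proof.
elim: S' t => [|x S' IH] t /=.
  rewrite inE => /eqP ->; exact: lexx.
rewrite !inE le_max => /orP [/eqP ->|/orP[/eqP ->|H]].
- by rewrite (IH s) ?orbT // inE eqxx.
- by rewrite lexx.
- by rewrite (IH t) ?orbT // inE H orbT.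
Qed.

Lemma fmin_le (f : lpt -> int) s S' t : t \in s :: S' ->
  foldr (fun t m => Num.min (f t) m) (f s) S' <= f t.
Proof.
elim: S' t => [|x S' IH] t /=.
  rewrite inE => /eqP ->; exact: lexx.
rewrite !inE ge_min => /orP [/eqP ->|/orP[/eqP ->|H]].
- by rewrite (IH s) ?orbT // inE eqxx.
- by rewrite lexx.
- by rewrite (IH t) ?orbT // inE H orbT.
Qed.

Lemma fmax_att (f : lpt -> int) s S' : exists2 t, t \in s :: S' &
  foldr (fun t m => Num.max (f t) m) (f s) S' = f t.
Proof.
elim: S' => [|x S' [t Ht IH]] /=.
  by exists s; rewrite ?inE.
rewrite IH maxEle; case: ifP => _.
- by exists t => //; move: Ht; rewrite !inE => /orP[->|->]; rewrite ?orbT.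
- by exists x; rewrite // !inE eqxx orbT.
Qed.

Lemma fmin_att (f : lpt -> int) s S' : exists2 t, t \in s :: S' &
  foldr (fun t m => Num.min (f t) m) (f s) S' = f t.
Proof.
elim: S' => [|x S' [t Ht IH]] /=.
  by exists s; rewrite ?inE.
rewrite IH minEle; case: ifP => _.
- by exists x; rewrite // !inE eqxx orbT.
- by exists t => //; move: Ht; rewrite !inE => /orP[->|->]; rewrite ?orbT.
Qed.

Lemma lwv_ge T v t t' : t \in T -> t' \in T -> dotz t v - dotz t' v <= lwv T v.
Proof.
case: T => [//|s S'] Ht Ht' /=.
apply: lerB; [exact: (fmax_ge (fun t => dotz t v)) | exact: (fmin_le (fun t => dotz t v))].
Qed.

Lemma lwv_att T v : T != [::] -> exists t t', [/\ t \in T, t' \in T &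
  lwv T v = dotz t v - dotz t' v].
Proof.
case: T => [//|s S'] _ /=.
have [t Ht ->] := fmax_att (fun t => dotz t v) s S'.
have [t' Ht' ->] := fmin_att (fun t => dotz t v) s S'.
by exists t, t'.
Qed.

Lemma sumE (s : seq rat) : \sum_(a <- s) a = \sum_(i < size s) s`_i.
Proof. by rewrite (big_nth 0) big_mkord. Qed.

Lemma nth_nonneg (s : seq rat) i : all (fun a => 0 <= a) s -> 0 <= s`_i.
Proof.
move=> /allP H; case: (ltnP i (size s)) => Hi.
  exact: (H _ (mem_nth 0 Hi)).
by rewrite nth_default.
Qed.

Lemma comb S n (w : 'I_n -> rat) (y : 'I_n -> rat * rat) :
 (forall j, 0 <= w j) -> \sum_j w j = 1 -> (forall j, inPoly S (y j)) ->
 inPoly S (\sum_j w j * (y j).1, \sum_j w j * (y j).2).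
Proof.
move=> w0 w1 Hy.
have [u Hu] := fin_all_exists Hy.
pose W := mkseq (fun i => \sum_j w j * (u j)`_i) (size S).
have HW : forall i : 'I_(size S), W`_i = \sum_j w j * (u j)`_i.
  by move=> i; rewrite nth_mkseq.
exists W; split.
- by rewrite size_mkseq.
- apply/allP => a /mapP [i _ ->]; apply: sumr_ge0 => j _; apply: mulr_ge0 => //.
  by case: (Hu j) => _ ? _ _ _; exact: nth_nonneg.
- rewrite sumE size_mkseq (eq_bigr _ (fun i _ => HW i)) exchange_big /=.
  rewrite -w1; apply: eq_bigr => j _; rewrite -mulr_sumr.
  case: (Hu j) => Hs _ Hsum _ _; by rewrite -Hs -sumE Hsum mulr1.
- rewrite /= (eq_bigr _ (fun i _ => congr1 (fun z => z * _) (HW i))) /=.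
  apply: esym; under eq_bigr do rewrite mulr_suml.
  rewrite exchange_big /=; apply: eq_bigr => j _.
  case: (Hu j) => _ _ _ -> _; rewrite mulr_sumr; apply: eq_bigr => i _.
  by rewrite mulrA.
- rewrite /= (eq_bigr _ (fun i _ => congr1 (fun z => z * _) (HW i))) /=.
  apply: esym; under eq_bigr do rewrite mulr_suml.
  rewrite exchange_big /=; apply: eq_bigr => j _.
  case: (Hu j) => _ _ _ _ ->; rewrite mulr_sumr; apply: eq_bigr => i _.
  by rewrite mulrA.
Qed.

Lemma conv2 S p q (c : rat) : inPoly S p -> inPoly S q -> 0 <= c <= 1 ->
  inPoly S (c * p.1 + (1-c) * q.1, c * p.2 + (1-c) * q.2).
Proof.
move=> Hp Hq /andP[c0 c1].
have := @comb S 2 (fun j => if val j == 0%N then c else 1-c)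
   (fun j => if val j == 0%N then p else q).
rewrite !big_ord_recl !big_ord0 /= !addr0; apply => //.
- by move=> j; case: ifP => _ //; rewrite subr_ge0.
- by rewrite addrC subrK.
- by move=> j; case: ifP.
Qed.

Lemma ext S P a b (l : rat) : is_vertex S P -> inPoly S a -> inPoly S b ->
  0 < l < 1 -> ptQ P = (l * a.1 + (1-l) * b.1, l * a.2 + (1-l) * b.2) -> a = ptQ P.
Proof.
move=> [HP Hv] Ha Hb /andP[l0 l1].
move: HP Hv; case: (ptQ P) => p1 p2 HP Hv.
move: Ha Hb; case: a => a1 a2; case: b => b1 b2 Ha Hb /= [E1 E2].
have key : a1 = b1 /\ a2 = b2.
  case: (lerP l (1/2)) => Hl.
  - have Hx := @conv2 _ _ _ (l/(1-l)) Ha HP.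
    have Hc : 0 <= l / (1 - l) <= 1.
      apply/andP; split; first by apply: divr_ge0; lra.
      by rewrite ler_pdivrMr; lra.
    have Hl1 : 1 - l != 0 by rewrite subr_eq0 eq_sym lt_eqF.
    have [F1 F2] := Hv _ _ (Hx Hc) Hb ltac:(rewrite /= E1 E2; congr pair; field; exact Hl1).
    rewrite E1 in F1; rewrite E2 in F2.
    move: F1 F2; set c := l / (1 - l) => F1 F2.
    have Hc' : c * (1 - l) = l by rewrite /c mulfVK.
    have G1 : (c*(1-l)+l)*(a1-b1) = (c * a1 + (1 - c) * (l * a1 + (1 - l) * b1)) - b1 by ring.
    have G2 : (c*(1-l)+l)*(a2-b2) = (c * a2 + (1 - c) * (l * a2 + (1 - l) * b2)) - b2 by ring.
    rewrite F1 subrr in G1; rewrite F2 subrr in G2.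
    rewrite Hc' in G1 G2; split.
      by move/eqP: G1; rewrite mulf_eq0 => /orP[/eqP H|]; [lra | rewrite subr_eq0 => /eqP].
      by move/eqP: G2; rewrite mulf_eq0 => /orP[/eqP H|]; [lra | rewrite subr_eq0 => /eqP].
  - have Hy := @conv2 _ _ _ ((1-l)/l) Hb HP.
    have Hc : 0 <= (1-l) / l <= 1.
      apply/andP; split; first by apply: divr_ge0; lra.
      by rewrite ler_pdivrMr; lra.
    have Hl1 : l != 0 by rewrite gt_eqF.
    have [F1 F2] := Hv _ _ Ha (Hy Hc) ltac:(rewrite /= E1 E2; congr pair; field; exact Hl1).
    rewrite E1 in F1; rewrite E2 in F2.
    move: F1 F2; set c := (1 - l) / l => F1 F2.
    have Hc' : c * l = 1 - l by rewrite /c mulfVK.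
    have G1 : (c * l + 1 - l)*(b1-a1) = (c * b1 + (1 - c) * (l * a1 + (1 - l) * b1)) - a1 by ring.
    have G2 : (c * l + 1 - l)*(b2-a2) = (c * b2 + (1 - c) * (l * a2 + (1 - l) * b2)) - a2 by ring.
    rewrite -F1 subrr in G1; rewrite -F2 subrr in G2.
    rewrite Hc' in G1 G2; split.
      by move/eqP: G1; rewrite mulf_eq0 => /orP[/eqP H|]; [lra | rewrite subr_eq0 => /eqP ->].
      by move/eqP: G2; rewrite mulf_eq0 => /orP[/eqP H|]; [lra | rewrite subr_eq0 => /eqP ->].
case: key => K1 K2.
by rewrite E1 E2 K1 K2; congr pair; ring.
Qed.

Lemma ptQ_inj z z' : ptQ z = ptQ z' -> z = z'.
Proof.
case: z => a b; case: z' => a' b' [] /eqP; rewrite eqr_int => /eqP -> /eqP.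
by rewrite eqr_int => /eqP ->.
Qed.

Lemma notinT S P T : is_vertex S P ->
  (forall z, z \in T -> inPoly S (ptQ z) /\ z <> P) -> ~ inPoly T (ptQ P).
Proof.
move=> HV HT [w [Hsz Hpos Hsum E1 E2]].
have w0 : forall j, 0 <= w`_j by move=> j; exact: nth_nonneg.
rewrite sumE Hsz in Hsum.
have HTj : forall j : 'I_(size T), inPoly S (ptQ (nth (0,0) T j)) /\ nth (0,0) T j <> P.
  by move=> j; apply: HT; rewrite mem_nth.
case: (boolP [exists i : 'I_(size T), 0 < w`_i]) => [/existsP [i Hi]|Hn]; last first.
  have : \sum_(j < size T) w`_j = 0.
    apply: big1 => j _; apply/eqP; rewrite eq_le w0 andbT.
    by move/existsPn: Hn => /(_ j); rewrite -leNgt.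
  by rewrite Hsum => /eqP; rewrite oner_eq0.
set l := w`_i in Hi.
rewrite (bigD1 i) //= in Hsum.
rewrite /= (bigD1 i) //= in E1.
rewrite /= (bigD1 i) //= in E2.
rewrite -/l in Hsum E1 E2.
have Hl1 : l <= 1.
  rewrite -Hsum lerDl; apply: sumr_ge0 => j _; exact: w0.
case: (HTj i) => Hai Hne; apply: Hne; apply: ptQ_inj.
case: (ltrP l 1) => Hl; last first.
  have l1 : l = 1 by apply/eqP; rewrite eq_le Hl1 Hl.
  have R0 : \sum_(j < size T | j != i) w`_j = 0 by move: Hsum; rewrite l1; lra.
  have Z := @psumr_eq0P _ _ (fun j => j != i) (fun j : 'I_(size T) => w`_j) (fun j _ => w0 j) R0.
  rewrite big1 ?addr0 in E1; last by move=> j Hj; rewrite Z // mul0r.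
  rewrite big1 ?addr0 in E2; last by move=> j Hj; rewrite Z // mul0r.
  by rewrite l1 !mul1r in E1 E2; rewrite /ptQ -E1 -E2.
pose b := (\sum_(j < size T) (if j == i then 0 else w`_j / (1 - l)) * (ptQ (nth (0,0) T j)).1,
           \sum_(j < size T) (if j == i then 0 else w`_j / (1 - l)) * (ptQ (nth (0,0) T j)).2).
have Hb : inPoly S b.
  apply: comb.
  - move=> j; case: ifP => _ //; apply: divr_ge0 => //; lra.
  - rewrite (bigD1 i) //= eqxx add0r.
    rewrite (eq_bigr (fun j : 'I_(size T) => w`_j / (1 - l))); last by move=> j /negbTE ->.
    rewrite -mulr_suml.
    have -> : \sum_(j < size T | j != i) w`_j = 1 - l by rewrite -Hsum; ring.
    by rewrite divff // subr_eq0 eq_sym lt_eqF.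
  - by move=> j; case: (HTj j).
apply: (@ext S P _ _ l HV Hai Hb).
  by apply/andP.
have Hl0 : 1 - l != 0 by rewrite subr_eq0 eq_sym lt_eqF.
rewrite /b /=; congr pair.
- rewrite (bigD1 i) //= eqxx mul0r add0r mulr_sumr.
  rewrite E1; congr (_ + _); apply: eq_bigr => j /negbTE ->.
  by field.
- rewrite (bigD1 i) //= eqxx mul0r add0r mulr_sumr.
  rewrite E2; congr (_ + _); apply: eq_bigr => j /negbTE ->.
  by field.
Qed.

Lemma subT S T : (forall z, z \in T -> inPoly S (ptQ z)) ->
  forall x, inPoly T x -> inPoly S x.
Proof.
move=> HT [x1 x2] [w [Hsz Hpos Hsum E1 E2]].
have := @comb S (size T) (fun j => w`_j) (fun j => ptQ (nth (0,0) T j)).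
rewrite /= in E1 E2; rewrite E1 E2; apply.
- by move=> j; exact: nth_nonneg.
- by rewrite -Hsum sumE Hsz.
- by move=> j; apply: HT; rewrite mem_nth.
Qed.

Lemma ex_min_nat (Q : nat -> Prop) : (exists n, Q n) ->
  exists n, Q n /\ forall m, Q m -> (n <= m)%N.
Proof.
move=> [n Hn].
suff: forall N n, (n <= N)%N -> Q n -> exists n0, Q n0 /\ forall m, Q m -> (n0 <= m)%N.
  by move/(_ n n (leqnn n) Hn).
elim => [|N IH] k Hk Qk.
  by exists k; split => // m _; move: Hk; rewrite leqn0 => /eqP ->.
case: (classic (exists m, (m < k)%N /\ Q m)) => [[m [Hm Qm]]|Hno].
  by apply: (IH m) => //; lia.
exists k; split => // m Qm; rewrite leqNgt; apply/negP => Hmk; apply: Hno.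
by exists m.
Qed.

Lemma keyineq (a b e d : int) : 1 <= d -> -d <= e -> e <= d -> b < a -> -b < a ->
  d <= a * d + b * e.
Proof. move=> *; nia. Qed.

Lemma lwv_nonneg T v : T != [::] -> 0 <= lwv T v.
Proof.
case: T => [//|s S'] _; have := @lwv_ge (s :: S') v s s.
by rewrite inE eqxx subrr; apply.
Qed.

Lemma lwv_negv T a b : T != [::] -> lwv T (a, b) <= lwv T (-a, -b).
Proof.
move=> Tn; have [t [t' [Ht Ht' ->]]] := @lwv_att T (a,b) Tn.
apply: le_trans (@lwv_ge T (-a,-b) _ _ Ht' Ht); rewrite /dotz /=; lia.
Qed.

Theorem mainTheorem5 (S : seq lpt) (d : int) (P : lpt) (T : seq lpt) :
  S != [::] ->
  (forall x, inPoly S x ->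
     (0 <= x.1 <= d%:~R) && (0 <= x.2 <= d%:~R)) ->
  1 <= d ->
  is_lw S d ->
  minimal S ->
  is_vertex S P ->
  (forall z : lpt, z \in T <-> (inPoly S (ptQ z) /\ z <> P)) ->
  exists v : lpt, v \in [:: (0, 1); (1, 0); (1, 1); (1, -1)] /\ lwv T v < d.
Proof.
move=> HS Hbox Hd Hlw Hmin HV HT.
case: (ltrP (lwv T (0,1)) d) => [h|h1]; first by exists (0,1).
case: (ltrP (lwv T (1,0)) d) => [h|h2]; first by exists (1,0).
case: (ltrP (lwv T (1,1)) d) => [h|h3]; first by exists (1,1).
case: (ltrP (lwv T (1,-1)) d) => [h|h4]; first by exists (1,-1).
exfalso.
have Tn : T != [::] by apply/eqP => E; move: h1; rewrite E /=; lia.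
have HT1 : forall z, z \in T -> inPoly S (ptQ z) by move=> z /HT [].
have Hb : forall z, z \in T -> (0 <= z.1 <= d) && (0 <= z.2 <= d).
  by move=> z /HT1 /Hbox /=; rewrite !ler0z !ler_int.
have [[b1 b2] [[a1 a2] [HB HA EBA]]] := @lwv_att T (1,0) Tn.
have [[d1 d2] [[c1 c2] [HD HC EDC]]] := @lwv_att T (0,1) Tn.
have /andP[/andP[A1 A1'] /andP[A2 A2']] := Hb _ HA.
have /andP[/andP[B1 B1'] /andP[B2 B2']] := Hb _ HB.
have /andP[/andP[C1 C1'] /andP[C2 C2']] := Hb _ HC.
have /andP[/andP[D1 D1'] /andP[D2 D2']] := Hb _ HD.
cbn [fst snd] in A1, A1', A2, A2', B1, B1', B2, B2', C1, C1', C2, C2', D1, D1', D2, D2'.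
rewrite EBA /dotz /= in h2; rewrite EDC /dotz /= in h1.
pose Q n := exists v, primitive v /\ lwv T v = n%:Z.
have [n0 [Qn0 Hn0]] : exists n, Q n /\ forall m, Q m -> (n <= m)%N.
  apply: ex_min_nat; exists (absz (lwv T (1,0))); exists ((1,0) : lpt); split => //.
  by rewrite gez0_abs // (@lwv_nonneg T (1,0) Tn).
have HlwT : is_lw T n0%:Z.
  split; first by case: Qn0 => v [Hv E]; exists v.
  move=> v Hv.
  have Hnn := @lwv_nonneg T v Tn.
  have HQ : Q (absz (lwv T v)) by exists v; split => //; rewrite gez0_abs.
  by have := Hn0 _ HQ; rewrite -lez_nat gez0_abs.
have Hlt := Hmin T Tn (@subT S T HT1) (ex_intro _ (ptQ P) (conj HV.1 (@notinT S P T HV (fun z Hz => proj1 (HT z) Hz)))) _ _ Hlw HlwT.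
case: Qn0 => [[a b] [Hprim Hv]].
suff : d <= lwv T (a,b) by rewrite Hv; move: Hlt; lia.
rewrite /primitive /= in Hprim.
have eAB : b1 - a1 = d by lia.
have eDC : d2 - c2 = d by lia.
case: (ltgtP a b) => Hab; case: (ltgtP a (-b)) => Hab'.
- apply: le_trans (@lwv_ge T (a,b) (a1,a2) (b1,b2) HA HB); rewrite /dotz /=.
  have K := @keyineq (-a) (-b) (b2 - a2) d Hd ltac:(lia) ltac:(lia) ltac:(lia) ltac:(lia).
  rewrite -{2}eAB in K; lia.
- apply: le_trans (@lwv_ge T (a,b) (d1,d2) (c1,c2) HD HC); rewrite /dotz /=.
  have K := @keyineq b a (d1 - c1) d Hd ltac:(lia) ltac:(lia) ltac:(lia) ltac:(lia).
  rewrite -{2}eDC in K; lia.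
- have Eb : b = -a by lia.
  rewrite Eb gcdzN gcdzz in Hprim.
  have Ea : a = -1 by move/eqP: Hprim; lia.
  rewrite Eb Ea opprK; apply: le_trans h4 _.
  by have := @lwv_negv T 1 (-1) Tn; rewrite opprK.
- apply: le_trans (@lwv_ge T (a,b) (c1,c2) (d1,d2) HC HD); rewrite /dotz /=.
  have K := @keyineq (-b) (-a) (d1 - c1) d Hd ltac:(lia) ltac:(lia) ltac:(lia) ltac:(lia).
  rewrite -{2}eDC in K; lia.
- apply: le_trans (@lwv_ge T (a,b) (b1,b2) (a1,a2) HB HA); rewrite /dotz /=.
  have K := @keyineq a b (b2 - a2) d Hd ltac:(lia) ltac:(lia) ltac:(lia) ltac:(lia).
  rewrite -{2}eAB in K; lia.
- have Eb : b = -a by lia.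
  rewrite Eb gcdzN gcdzz in Hprim.
  have Ea : a = 1 by move/eqP: Hprim; lia.
  by rewrite Eb Ea.
- rewrite -Hab gcdzz in Hprim.
  have Ea : a = -1 by move/eqP: Hprim; lia.
  rewrite -Hab Ea; apply: le_trans h3 _.
  exact: (@lwv_negv T 1 1 Tn).
- rewrite -Hab gcdzz in Hprim.
  have Ea : a = 1 by move/eqP: Hprim; lia.
  by rewrite -Hab Ea.
- have Ea : a = 0 by lia.
  by rewrite -Hab Ea gcdzz in Hprim.
Qed.
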